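(* For a real root $\alpha$ let $\pi_\alpha:=\alpha\,(\alpha|\cdot)\in\mathrm{End}(\mathfrak h^* )$, i.e. $\pi_\alpha(x)=(\alpha|x)\alpha$. Define $X:\Delta^{\mathrm{re}}\to\mathrm{End}(\mathrm{Sym}^2(\mathfrak h^* ))$ by $$X(\alpha):=\pi_\alpha\otimes\pi_\alpha-\big(\pi_\alpha\otimes\mathrm{id}_{\mathfrak h^*}+\mathrm{id}_{\mathfrak h^*}\otimes\pi_\alpha\big)+\tfrac12\,\mathrm{id}_{\mathfrak h^*}\otimes\mathrm{id}_{\mathfrak h^*}$$ (restricted to the subspace $\mathrm{Sym}^2(\mathfrak h^* )\subseteq\mathfrak h^*\otimes\mathfrak h^*$ of symmetric tensors, which it preserves). Then for all real roots $\alpha,\beta$: $X(\alpha)X(\beta)-X(\beta)X(\alpha)=0$ if $(\alpha|\beta)=0$, and $X(\alpha)X(\beta)+X(\beta)X(\alpha)=X(\alpha\pm\beta)$ if $(\alpha|\beta)=\mp1$. Consequently the assignment $X_i\mapsto X(\alpha_i)\otimes\Gamma(\alpha_i)\in\mathrm{End}(\mathrm{Sym}^2(\mathfrak h^* )\otimes S)$ extends to a representation $\sigma$ of $\mathfrak k$.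
   Context: Let $A=(a_{ij})_{1\le i,j\le n}$ be a symmetrizable simply laced generalized Cartan matrix (off-diagonal entries $0$ or $-1$); the Dynkin diagram has an edge between $i\ne j$ iff $a_{ij}=-1$. Let $\mathfrak g$ be the split real Kac–Moody algebra of $A$ with Chevalley generators $e_i,f_i$, Cartan subalgebra $\mathfrak h$ (from a real realization), simple roots $\alpha_1,\dots,\alpha_n\in\mathfrak h^*$, set of real roots $\Delta^{\mathrm{re}}$, and let $(\cdot|\cdot)$ be the nondegenerate invariant symmetric bilinear form induced on $\mathfrak h^*$, with $(\alpha_i|\alpha_j)=a_{ij}$ (so $(\alpha|\alpha)=2$ for real roots). Let $\mathfrak k$ be the fixed-point subalgebra of the Chevalley involution ($e_i\mapsto -f_i$, $f_i\mapsto-e_i$, $h\mapsto -h$), with Berman generators $X_i=e_i-f_i$; $\mathfrak k$ is presented by generators $X_1,\dots,X_n$ and relations $[X_i,[X_i,X_j]]=-X_j$ if $a_{ij}=-1$, $[X_i,X_j]=0$ if $a_{ij}=0$. A generalized spin representation is a representation $\rho$ of $\mathfrak k$ with $\rho(X_i)^2=-\frac14\mathrm{id}$. Fix a finite-dimensional real vector space $S$ with positive definite inner product and orthonormal basis, and a generalized spin representation $\rho:\mathfrak k\to\mathrm{End}(S)$ whose values $\rho(X_i)$ are anti-symmetric real matrices in this basis (such exist, e.g. by realifying the generalized spin representations with compact image of Hainke–Köhl–Levy); put $\Gamma(\alpha_i):=2\rho(X_i)$. *)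

(* Defs.v *)
From HB Require Import structures.
From mathcomp Require Import all_boot all_order all_algebra.
From mathcomp Require Import mxtens.
Set Implicit Arguments. Unset Strict Implicit. Unset Printing Implicit Defensive.
Import Order.TTheory GRing.Theory Num.Theory.
Local Open Scope ring_scope.

(* Conventions: h* is modelled as column vectors 'cV[R]_d (coordinates in a
   fixed basis); the invariant form is (x|y) := x^T B y for a symmetric
   nondegenerate matrix B.  Endomorphisms act on column vectors from the left,
   so composition of endomorphisms is matrix product.  h* (x) h* is
   'cV_(d*d) via the Kronecker product [tensmx] (notation *t). *)

Section Defs.
Variable R : realFieldType.

Definition invform d (B : 'M[R]_d) (x y : 'cV[R]_d) : R := (x^T *m B *m y) 0 0.

Definition root_refl d (B : 'M[R]_d) (a x : 'cV[R]_d) : 'cV[R]_d :=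
  x - invform B a x *: a.

(* real roots: the Weyl group orbit of the simple roots, i.e. the smallest set
   containing the simple roots and stable under the simple reflections *)
Inductive real_root n d (B : 'M[R]_d) (alpha : 'I_n -> 'cV[R]_d)
  : 'cV[R]_d -> Prop :=
| rr_simple i : real_root B alpha (alpha i)
| rr_refl i x : real_root B alpha x -> real_root B alpha (root_refl B (alpha i) x).

Definition pi_mx d (B : 'M[R]_d) (a : 'cV[R]_d) : 'M[R]_d := a *m a^T *m B.

Definition Xop d (B : 'M[R]_d) (a : 'cV[R]_d) : 'M[R]_(d * d) :=
  pi_mx B a *t pi_mx B a
  - (pi_mx B a *t (1%:M : 'M[R]_d) + (1%:M : 'M[R]_d) *t pi_mx B a)
  + 2^-1 *: ((1%:M : 'M[R]_d) *t (1%:M : 'M[R]_d)).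

Definition sym2 d (v : 'cV[R]_(d * d)) : Prop :=
  forall i j : 'I_d, v (mxtens_index (i, j)) 0 = v (mxtens_index (j, i)) 0.

Definition sym2S d N (w : 'cV[R]_(d * d * N)) : Prop :=
  forall (i j : 'I_d) (k : 'I_N),
    w (mxtens_index (mxtens_index (i, j), k)) 0
    = w (mxtens_index (mxtens_index (j, i), k)) 0.

Definition lie_br m (M M' : 'M[R]_m) : 'M[R]_m := M *m M' - M' *m M.

(* A family Y_i of endomorphisms of R^m, restricted to the invariant subspace
   {v | P v}, satisfies the defining relations of the presentation of k:
   [Y_i,[Y_i,Y_j]] = -Y_j if a_ij = -1 and [Y_i,Y_j] = 0 if a_ij = 0.
   By the presentation of k, this is exactly a representation of k on
   {v | P v} with X_i |-> Y_i. *)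
Definition k_rep_on n m (A : 'M[int]_n) (P : 'cV[R]_m -> Prop)
    (Y : 'I_n -> 'M[R]_m) : Prop :=
  (forall i v, P v -> P (Y i *m v)) /\
  (forall i j, A i j = -1 -> forall v, P v ->
      lie_br (Y i) (lie_br (Y i) (Y j)) *m v = - (Y j *m v)) /\
  (forall i j, A i j = 0 -> forall v, P v -> lie_br (Y i) (Y j) *m v = 0).

End Defs.

Definition simply_laced_gcm n (A : 'M[int]_n) : Prop :=
  (forall i, A i i = 2) /\
  (forall i j, i != j -> A i j = 0 \/ A i j = -1) /\
  (forall i j, A i j = 0 -> A j i = 0).

(* Main.v *)
Require Import Defs.
From HB Require Import structures.
From mathcomp Require Import all_boot all_order all_algebra.
From mathcomp Require Import mxtens.
Import Order.TTheory GRing.Theory Num.Theory.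
From mathcomp Require Import ring lra.
Local Open Scope ring_scope.
Set Implicit Arguments. Unset Strict Implicit. Unset Printing Implicit Defensive.

Section H.
Variable R : realFieldType.

Lemma sum_tens (m n : nat) (F : 'I_(m*n) -> R) :
  \sum_k F k = \sum_i \sum_j F (mxtens_index (i,j)).
Proof.
rewrite pair_big /= [LHS](reindex (@mxtens_index m n)) /=.
  by apply: eq_bigr => -[i j].
by exists (@mxtens_unindex m n) => k _; [apply: mxtens_indexK | apply: mxtens_unindexK].
Qed.

Lemma tensmulE (m n p q : nat) (X : 'M[R]_(m,n)) (Y: 'M[R]_(p,q)) (v : 'cV[R]_(n*q)) i j :
 ((X *t Y) *m v) (mxtens_index (i,j)) 0 = \sum_k \sum_l X i k * Y j l * v (mxtens_index (k,l)) 0.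
Proof.
rewrite mxE sum_tens; apply: eq_bigr => k _; apply: eq_bigr => l _.
by rewrite tensmxE.
Qed.

Lemma tensDl m n p q (A B : 'M[R]_(m,n)) (C : 'M[R]_(p,q)) : (A + B) *t C = A *t C + B *t C.
Proof. by apply/matrixP => i j; rewrite !mxE mulrDl. Qed.
Lemma tensDr m n p q (A B : 'M[R]_(m,n)) (C : 'M[R]_(p,q)) : C *t (A + B) = C *t A + C *t B.
Proof. by apply/matrixP => i j; rewrite !mxE mulrDr. Qed.
Lemma tensNl m n p q (A : 'M[R]_(m,n)) (C : 'M[R]_(p,q)) : (- A) *t C = - (A *t C).
Proof. by apply/matrixP => i j; rewrite !mxE mulNr. Qed.
Lemma tensNr m n p q (A : 'M[R]_(m,n)) (C : 'M[R]_(p,q)) : C *t (- A) = - (C *t A).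
Proof. by apply/matrixP => i j; rewrite !mxE mulrN. Qed.
Lemma tensZl m n p q c (A : 'M[R]_(m,n)) (C : 'M[R]_(p,q)) : (c *: A) *t C = c *: (A *t C).
Proof. by apply/matrixP => i j; rewrite !mxE mulrA. Qed.
Lemma tensZr m n p q c (A : 'M[R]_(m,n)) (C : 'M[R]_(p,q)) : C *t (c *: A) = c *: (C *t A).
Proof. by apply/matrixP => i j; rewrite !mxE mulrCA. Qed.

Lemma tens11 m n : (1%:M : 'M[R]_m) *t (1%:M : 'M[R]_n) = 1%:M.
Proof.
apply/matrixP => i j.
case: (mxtens_indexP i) => i1 i2; case: (mxtens_indexP j) => j1 j2.
rewrite tensmxE !mxE -natrM mulnb; congr (_%:R); congr nat_of_bool.
apply/andP/eqP => [[/eqP -> /eqP ->] //|/(congr1 (@mxtens_unindex m n))].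
by rewrite !mxtens_indexK => -[-> ->].
Qed.

Lemma swap_sum m d (X Y : 'M[R]_(m,d)) (v : 'cV[R]_(d*d)) i j : sym2 v ->
  ((X *t Y) *m v) (mxtens_index (i,j)) 0 = ((Y *t X) *m v) (mxtens_index (j,i)) 0.
Proof.
move=> sv; rewrite !tensmulE [RHS]exchange_big; apply: eq_bigr => k _.
by apply: eq_bigr => l _; rewrite (sv l k); ring.
Qed.

Lemma sym2D d (u w : 'cV[R]_(d*d)) : sym2 u -> sym2 w -> sym2 (u + w).
Proof. by move=> su sw i j; rewrite !mxE su sw. Qed.
Lemma sym2N d (u : 'cV[R]_(d*d)) : sym2 u -> sym2 (- u).
Proof. by move=> su i j; rewrite !mxE su. Qed.
Lemma sym2Z d c (u : 'cV[R]_(d*d)) : sym2 u -> sym2 (c *: u).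
Proof. by move=> su i j; rewrite !mxE su. Qed.

Lemma sym2_tt d (X Y : 'M[R]_d) v : sym2 v -> sym2 ((X *t Y) *m v + (Y *t X) *m v).
Proof. by move=> sv i j; rewrite [LHS]mxE [RHS]mxE; rewrite (swap_sum X Y i j sv) (swap_sum Y X i j sv) // addrC. Qed.

Lemma sym2_t d (X : 'M[R]_d) v : sym2 v -> sym2 ((X *t X) *m v).
Proof. by move=> sv i j; rewrite swap_sum. Qed.

Lemma row_swap d (r s : 'rV[R]_d) v : sym2 v -> (s *t r) *m v = (r *t s) *m v.
Proof.
move=> sv; apply/matrixP => i j; case: (mxtens_indexP i) => i1 i2.
by rewrite [j]ord1 swap_sum // [i1]ord1 [i2]ord1.
Qed.

Section Form.
Variables (d : nat) (B : 'M[R]_d).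
Hypothesis HB : B^T = B.

Lemma invformC x y : invform B x y = invform B y x.
Proof.
rewrite /invform.
have -> : (x^T *m B *m y) 0 0 = (x^T *m B *m y)^T 0 0 by rewrite [RHS]mxE.
by rewrite !trmx_mul trmxK HB mulmxA.
Qed.

Lemma invformDr x y z : invform B x (y + z) = invform B x y + invform B x z.
Proof. by rewrite /invform mulmxDr mxE. Qed.
Lemma invformZr x c y : invform B x (c *: y) = c * invform B x y.
Proof. by rewrite /invform -scalemxAr mxE. Qed.
Lemma invformNr x y : invform B x (- y) = - invform B x y.
Proof. by rewrite /invform mulmxN mxE. Qed.
Lemma invformDl x y z : invform B (y + z) x = invform B y x + invform B z x.
Proof. by rewrite !(invformC _ x) invformDr. Qed.
Lemma invformZl x c y : invform B (c *: y) x = c * invform B y x.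
Proof. by rewrite !(invformC _ x) invformZr. Qed.
Lemma invformNl x y : invform B (- y) x = - invform B y x.
Proof. by rewrite !(invformC _ x) invformNr. Qed.

Lemma pi_mul a b : pi_mx B a *m pi_mx B b = invform B a b *: (a *m (b^T *m B)).
Proof.
have e : a^T *m B *m b = (invform B a b)%:M by rewrite [LHS]mx11_scalar.
rewrite /pi_mx !mulmxA -[a *m a^T *m B]mulmxA -[a *m (a^T *m B) *m b]mulmxA e.
by rewrite mul_mx_scalar -!scalemxAl.
Qed.

Lemma piN a : pi_mx B (- a) = pi_mx B a.
Proof. by rewrite /pi_mx linearN /= mulNmx mulmxN opprK. Qed.

Lemma XopN a : Xop B (- a) = Xop B a.
Proof. by rewrite /Xop piN. Qed.

Lemma piD a b : pi_mx B (a + b) = pi_mx B a + pi_mx B b + a *m (b^T *m B) + b *m (a^T *m B).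
Proof.
rewrite /pi_mx linearD /= !mulmxDl !mulmxDr !mulmxA.
by rewrite !mulmxDl; apply/matrixP => i j; rewrite !mxE; ring.
Qed.

End Form.

Lemma XopE d (B : 'M[R]_d) a :
  Xop B a = (pi_mx B a - 1%:M) *t (pi_mx B a - 1%:M) - 2^-1 *: 1%:M.
Proof.
rewrite /Xop -tens11; move: (pi_mx B a) => P; apply/matrixP => i j.
case: (mxtens_indexP i) => i1 i2; case: (mxtens_indexP j) => j1 j2.
by rewrite !mxE !mxtens_indexK /=; field.
Qed.


Lemma Xmul d (B : 'M[R]_d) a b :
 Xop B a *m Xop B b =
   ((pi_mx B a - 1%:M) *m (pi_mx B b - 1%:M)) *t ((pi_mx B a - 1%:M) *m (pi_mx B b - 1%:M))
   - 2^-1 *: ((pi_mx B a - 1%:M) *t (pi_mx B a - 1%:M))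
   - 2^-1 *: ((pi_mx B b - 1%:M) *t (pi_mx B b - 1%:M)) + (2^-1 * 2^-1) *: 1%:M.
Proof.
rewrite !XopE; move: (pi_mx B a - 1%:M) (pi_mx B b - 1%:M) => Pa Pb.
rewrite mulmxBl !mulmxBr -!scalemxAr -!scalemxAl !mulmx1 !mul1mx tensmx_mul.
move: (Pa *m Pb *t (Pa *m Pb)) (Pa *t Pa) (Pb *t Pb) => M1 M2 M3.
by apply/matrixP => i j; rewrite !mxE; ring.
Qed.


Lemma PPE d (p q : 'M[R]_d) : (p - 1%:M) *m (q - 1%:M) = p *m q - p - q + 1%:M.
Proof.
rewrite mulmxBl !mulmxBr !mulmx1 mul1mx; move: (p *m q) => pq.
by apply/matrixP => i j; rewrite !mxE; ring.
Qed.

Lemma key d (B : 'M[R]_d) (a b : 'cV[R]_d) : B^T = B -> invform B a b = -1 ->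
  forall v, sym2 v ->
  (Xop B a *m Xop B b + Xop B b *m Xop B a) *m v = Xop B (a + b) *m v.
Proof.
move=> HB Hab v sv.
have Hba : invform B b a = -1 by rewrite invformC.
have pq : pi_mx B a *m pi_mx B b = - (a *m (b^T *m B)) by rewrite pi_mul Hab scaleN1r.
have qp : pi_mx B b *m pi_mx B a = - (b *m (a^T *m B)) by rewrite pi_mul Hba scaleN1r.
rewrite !Xmul XopE !PPE pq qp piD.
apply/eqP; rewrite -subr_eq0 -mulmxBl.
set U := a *m (b^T *m B); set W := b *m (a^T *m B).
rewrite [X in X *m v](_ : _ = pi_mx B a *t pi_mx B b + pi_mx B b *t pi_mx B a - U *t W - W *t U).
  have e1 : pi_mx B a *t pi_mx B b = (a *t b) *m ((a^T *m B) *t (b^T *m B)).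
    by rewrite tensmx_mul /pi_mx !mulmxA.
  have e2 : pi_mx B b *t pi_mx B a = (b *t a) *m ((b^T *m B) *t (a^T *m B)).
    by rewrite tensmx_mul /pi_mx !mulmxA.
  have e3 : U *t W = (a *t b) *m ((b^T *m B) *t (a^T *m B)) by rewrite tensmx_mul.
  have e4 : W *t U = (b *t a) *m ((a^T *m B) *t (b^T *m B)) by rewrite tensmx_mul.
  rewrite e1 e2 e3 e4 !mulmxBl mulmxDl -!mulmxA (row_swap (a^T *m B) (b^T *m B) sv).
  by rewrite addrAC addrK subrr.
rewrite -tens11; move: (pi_mx B a) (pi_mx B b) U W => p q U W.
apply/matrixP => i j.
case: (mxtens_indexP i) => i1 i2; case: (mxtens_indexP j) => j1 j2.
by rewrite !mxE !mxtens_indexK /=; field.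
Qed.


Lemma key1 d (B : 'M[R]_d) (a b : 'cV[R]_d) : B^T = B -> invform B a b = 1 ->
  forall v, sym2 v ->
  (Xop B a *m Xop B b + Xop B b *m Xop B a) *m v = Xop B (a - b) *m v.
Proof.
move=> HB Hab v sv; by rewrite -(XopN B b) key // invformNr Hab.
Qed.

Lemma comm0 d (B : 'M[R]_d) (a b : 'cV[R]_d) : B^T = B -> invform B a b = 0 ->
  Xop B a *m Xop B b = Xop B b *m Xop B a.
Proof.
move=> HB Hab.
have Hba : invform B b a = 0 by rewrite invformC.
rewrite !Xmul !PPE !pi_mul Hab Hba !scale0r -tens11.
move: (pi_mx B a) (pi_mx B b) => p q.
apply/matrixP => i j.
case: (mxtens_indexP i) => i1 i2; case: (mxtens_indexP j) => j1 j2.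
by rewrite !mxE !mxtens_indexK /=; ring.
Qed.

Lemma sym2_Xop d (B : 'M[R]_d) a v : sym2 v -> sym2 (Xop B a *m v).
Proof.
move=> sv; rewrite /Xop mulmxDl mulmxBl mulmxDl -scalemxAl.
apply: sym2D; [apply: sym2D; [apply: sym2_t | apply: sym2N; apply: sym2_tt] | apply: sym2Z; apply: sym2_t]; done.
Qed.

Lemma mx_ext m (M M' : 'M[R]_m) : (forall v : 'cV[R]_m, M *m v = M' *m v) -> M = M'.
Proof.
move=> h; apply/matrixP => i j.
have := congr1 (fun X : 'M[R]_(m,1) => X i 0) (h (delta_mx j 0)).
by rewrite -!colE !mxE.
Qed.

Definition slice d N (w : 'cV[R]_(d * d * N)) (k : 'I_N) : 'cV[R]_(d*d) :=
  \col_l w (mxtens_index (l, k)) 0.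

Lemma sym2S_slice d N (w : 'cV[R]_(d * d * N)) k : sym2S w -> sym2 (slice w k).
Proof. by move=> sw i j; rewrite !mxE sw. Qed.

Lemma tensD1E d N (D : 'M[R]_(d*d)) (w : 'cV[R]_(d * d * N)) l k :
  ((D *t (1%:M : 'M[R]_N)) *m w) (mxtens_index (l,k)) 0 = (D *m slice w k) l 0.
Proof.
rewrite tensmulE mxE; apply: eq_bigr => l' _.
rewrite (bigD1 k) //= [X in _ + X]big1 ?addr0 => [|k' nk]; first by rewrite !mxE eqxx mulr1.
by rewrite !mxE eq_sym (negbTE nk) mulr0 mul0r.
Qed.

Lemma tens1tE d N (t : 'M[R]_N) (w : 'cV[R]_(d * d * N)) l k :
  (((1%:M : 'M[R]_(d*d)) *t t) *m w) (mxtens_index (l,k)) 0 =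
  \sum_k' t k k' * w (mxtens_index (l, k')) 0.
Proof.
rewrite tensmulE (bigD1 l) //= [X in _ + X]big1 ?addr0 => [|l' nl].
  by apply: eq_bigr => k' _; rewrite !mxE eqxx mul1r.
by apply: big1 => k' _; rewrite !mxE eq_sym (negbTE nl) !mul0r.
Qed.

Lemma sym2S_1t d N (t : 'M[R]_N) (w : 'cV[R]_(d * d * N)) :
  sym2S w -> sym2S (((1%:M : 'M[R]_(d*d)) *t t) *m w).
Proof. by move=> sw i j k; rewrite !tens1tE; apply: eq_bigr => k' _; rewrite sw. Qed.

Lemma sym2S_D1 d N (D : 'M[R]_(d*d)) (w : 'cV[R]_(d * d * N)) :
  (forall v, sym2 v -> sym2 (D *m v)) -> sym2S w -> sym2S ((D *t (1%:M : 'M[R]_N)) *m w).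
Proof.
move=> hD sw i j k; rewrite !tensD1E.
by apply: hD; apply: sym2S_slice.
Qed.

Lemma kill_D1 d N (D : 'M[R]_(d*d)) (w : 'cV[R]_(d * d * N)) :
  (forall v, sym2 v -> D *m v = 0) -> sym2S w -> (D *t (1%:M : 'M[R]_N)) *m w = 0.
Proof.
move=> hD sw; apply/matrixP => x y; case: (mxtens_indexP x) => l k.
by rewrite [y]ord1 tensD1E hD ?mxE //; apply: sym2S_slice.
Qed.

Lemma lieL d N (x y : 'M[R]_d) (r t : 'M[R]_N) :
  r *m t *m r = t -> t *m r *m r = - t -> r *m r *m t = - t ->
  lie_br (x *t r) (lie_br (x *t r) (y *t t)) =
  - ((x *m (x *m y + y *m x) + (x *m y + y *m x) *m x) *t t).
Proof.
move=> rtr trr rrt.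
rewrite /lie_br mulmxBr mulmxBl !tensmx_mul !mulmxA rtr trr rrt.
rewrite mulmxDr mulmxDl !mulmxA !tensDl !tensNr.
move: (x *m x *m y *t t) (x *m y *m x *t t) (y *m x *m x *t t) => T1 T2 T3.
by apply/matrixP => a b; rewrite !mxE; ring.
Qed.

End H.

Unset Implicit Arguments.
Theorem proposition6p5 (R : realFieldType) (n d N : nat) (A : 'M[int]_n)
    (B : 'M[R]_d) (alpha : 'I_n -> 'cV[R]_d) (rho : 'I_n -> 'M[R]_N) :
  simply_laced_gcm A ->
  (* realization: dim h* = 2n - rank A, simple roots linearly independent *)
  d = (2 * n - \rank (map_mx (fun z : int => z%:~R : R) A))%N ->
  row_free (\matrix_(i < n) (alpha i)^T) ->
  (* nondegenerate invariant symmetric form with (alpha_i|alpha_j) = a_ij *)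
  B^T = B -> B \in unitmx ->
  (forall i j, invform B (alpha i) (alpha j) = (A i j)%:~R) ->
  (* generalized spin representation with anti-symmetric values *)
  k_rep_on A (fun _ => True) rho ->
  (forall i, rho i *m rho i = - (4^-1 *: 1%:M)) ->
  (forall i, (rho i)^T = - rho i) ->
  (* X(a) preserves Sym^2 h*  *)
  (forall a, real_root B alpha a ->
     forall v, sym2 v -> sym2 (Xop B a *m v)) /\
  (* commutation relations on Sym^2 h*  *)
  (forall a b, real_root B alpha a -> real_root B alpha b ->
     (invform B a b = 0 ->
        forall v, sym2 v -> (Xop B a *m Xop B b - Xop B b *m Xop B a) *m v = 0) /\
     (invform B a b = -1 ->
        forall v, sym2 v ->
          (Xop B a *m Xop B b + Xop B b *m Xop B a) *m v = Xop B (a + b) *m v) /\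
     (invform B a b = 1 ->
        forall v, sym2 v ->
          (Xop B a *m Xop B b + Xop B b *m Xop B a) *m v = Xop B (a - b) *m v)) /\
  (* X_i |-> X(alpha_i) (x) Gamma(alpha_i), Gamma(alpha_i) = 2 rho(X_i),
     defines a representation sigma of k on Sym^2 h* (x) S *)
  k_rep_on A (@sym2S R d N) (fun i => Xop B (alpha i) *t (2 *: rho i)).
Proof.
move=> [Aii [Aoff Asym]] _ _ HB _ Hform Hrho Hrr Hanti.
split.
  by move=> a _ v sv; apply: sym2_Xop.
split.
  move=> a b _ _; split; [|split].
  - by move=> h v sv; rewrite (comm0 HB h) subrr mul0mx.
  - by move=> h; apply: key.
  - by move=> h; apply: key1.
have Hii : forall i, invform B (alpha i) (alpha i) = 2 by move=> i; rewrite Hform Aii.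
case: Hrho => _ [Hrho1 Hrho0].
split; [|split].
- move=> i w sw; rewrite tensmx_decr -mulmxA.
  apply: sym2S_D1; [by move=> v; apply: sym2_Xop | exact: sym2S_1t].
- move=> i j Aij w sw.
  have Hij : invform B (alpha i) (alpha j) = -1 by rewrite Hform Aij.
  have rr : (2 *: rho i) *m (2 *: rho i) = - 1%:M.
    rewrite -scalemxAl -scalemxAr scalerA Hrr scalerN scalerA.
    by rewrite (_ : 2 * 2 / 4 = 1) ?scale1r //; field.
  have Lr : lie_br (rho i) (lie_br (rho i) (rho j)) = - rho j.
    by apply: mx_ext => v; rewrite mulNmx; apply: Hrho1.
  rewrite /lie_br mulmxBr mulmxBl !mulmxA Hrr -(mulmxA (rho j)) Hrr in Lr.
  rewrite mulNmx mulmxN -scalemxAl -scalemxAr mul1mx mulmx1 in Lr.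
  have Mr : rho i *m rho j *m rho i = 4^-1 *: rho j.
    move: (rho i *m rho j *m rho i) Lr => M Lr.
    apply/matrixP => a b; move/matrixP: Lr => /(_ a b); rewrite !mxE => Lr.
    lra.
  have rtr : (2 *: rho i) *m (2 *: rho j) *m (2 *: rho i) = 2 *: rho j.
    rewrite -!scalemxAl -!scalemxAr !scalerA -!scalemxAl !scalerA Mr scalerA.
    by rewrite (_ : 2 * 2 * 2 / 4 = 2) //; field.
  have trr : (2 *: rho j) *m (2 *: rho i) *m (2 *: rho i) = - (2 *: rho j).
    by rewrite -mulmxA rr mulmxN mulmx1.
  have rrt : (2 *: rho i) *m (2 *: rho i) *m (2 *: rho j) = - (2 *: rho j).
    by rewrite rr mulNmx mul1mx.
  move: (2 *: rho i) (2 *: rho j) rr rtr trr rrt => r t rr rtr trr rrt.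
  pose x := Xop B (alpha i); pose y := Xop B (alpha j).
  pose E := x *m (x *m y + y *m x) + (x *m y + y *m x) *m x.
  have L : lie_br (x *t r) (lie_br (x *t r) (y *t t)) = - (E *t t) by apply: lieL.
  rewrite L mulNmx; congr (- _).
  apply/eqP; rewrite -subr_eq0.
  have -> : (E *t t) *m w - (y *t t) *m w = ((E - y) *t t) *m w.
    by rewrite -mulmxBl -tensNl -tensDl.
  rewrite tensmx_decr -mulmxA kill_D1 //; last exact: sym2S_1t.
  move=> v sv.
  have H2 : invform B (alpha i) (- (alpha i + alpha j)) = -1.
    rewrite invformNr invformDr Hii Hij; ring.
  have e := key HB H2 sv.
  rewrite XopN (_ : alpha i + - (alpha i + alpha j) = - alpha j) in e; last first.
    by rewrite opprD addrA subrr add0r.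
  rewrite XopN in e.
  have e1 := key HB Hij sv.
  have e2 := key HB Hij (sym2_Xop B (alpha i) sv).
  rewrite mulmxBl /E (mulmxDl (x *m (x *m y + y *m x))) -!mulmxA e1 e2 -/x -/y.
  by rewrite !mulmxA -mulmxDl e subrr.
- move=> i j Aij w sw.
  have Hij : invform B (alpha i) (alpha j) = 0 by rewrite Hform Aij.
  have c : rho i *m rho j = rho j *m rho i.
    apply/eqP; rewrite -subr_eq0; apply/eqP; apply: mx_ext => v.
    by rewrite mul0mx; apply: Hrho0.
  have rt : (2 *: rho i) *m (2 *: rho j) = (2 *: rho j) *m (2 *: rho i).
    by rewrite -!scalemxAl -!scalemxAr c.
  by rewrite /lie_br !tensmx_mul (comm0 HB Hij) rt subrr mul0mx.
Qed.
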